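(* Let $\mathfrak A$ and $\mathcal A$ be Banach algebras such that $\mathcal A$ is a Banach $\mathfrak A$-bimodule with compatible actions. If $\mathcal A$ is approximately amenable (as a Banach algebra) and $\mathcal A$ is essential as a left $\mathfrak A$-module or as a right $\mathfrak A$-module, then $\mathcal A$ is $\mathfrak A$-module approximately contractible.
   Context: Compatible actions: $\alpha\cdot(ab)=(\alpha\cdot a)b$, $(ab)\cdot\alpha=a(b\cdot\alpha)$ for $a,b\in\mathcal A,\alpha\in\mathfrak A$. $\mathcal A$ is a left essential $\mathfrak A$-module if the linear span of $\{\alpha\cdot a\}$ is dense in $\mathcal A$ (right essential similarly). $\mathcal A$ is approximately amenable if for every Banach $\mathcal A$-bimodule $X$ every bounded (linear) derivation $D:\mathcal A\to X^*$ is approximately inner, i.e. $D(a)=\lim_i(a\cdot f_i-f_i\cdot a)$ in norm for some net $(f_i)$ and all $a$. A Banach $\mathcal A$-$\mathfrak A$-module is a Banach space $X$ which is a Banach $\mathcal A$-bimodule and $\mathfrak A$-bimodule with $\alpha\cdot(a\cdot x)=(\alpha\cdot a)\cdot x$, $a\cdot(\alpha\cdot x)=(a\cdot\alpha)\cdot x$, $a\cdot(x\cdot\alpha)=(a\cdot x)\cdot\alpha$ and analogous right-sided identities; commutative if $\alpha\cdot x=x\cdot\alpha$. A module derivation $D:\mathcal A\to X$ is an additive map, bounded ($\|D(a)\|\le M\|a\|$), with $D(ab)=D(a)\cdot b+a\cdot D(b)$, $D(\alpha\cdot a)=\alpha\cdot D(a)$, $D(a\cdot\alpha)=D(a)\cdot\alpha$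 (not assumed $\mathbb C$-linear). $\mathcal A$ is $\mathfrak A$-module approximately contractible if for every commutative Banach $\mathcal A$-$\mathfrak A$-module $X$, every module derivation $D:\mathcal A\to X$ is approximately inner (there is a net $(x_i)\subseteq X$ with $D(a)=\lim_i(a\cdot x_i-x_i\cdot a)$ in norm for all $a$). *)

(* Defs.v *)
From mathcomp Require Import all_boot all_algebra.
From mathcomp Require Import all_classical all_reals all_analysis.
From mathcomp Require Export complex.
Import numFieldNormedType.Exports.

Set Implicit Arguments.
Unset Strict Implicit.
Unset Printing Implicit Defensive.
Import GRing.Theory Num.Theory.
Local Open Scope ring_scope.

Section Defs.
Variable K : numFieldType.

Definition directed (I : Type) (le : I -> I -> Prop) : Prop :=
  (forall i, le i i) /\
  (forall i j k, le i j -> le j k -> le i k) /\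
  (exists i : I, True) /\
  (forall i j, exists k, le i k /\ le j k).

Definition bilinear_map (U V W : lmodType K) (f : U -> V -> W) : Prop :=
  (forall u1 u2 v, f (u1 + u2) v = f u1 v + f u2 v) /\
  (forall (k : K) u v, f (k *: u) v = k *: f u v) /\
  (forall u v1 v2, f u (v1 + v2) = f u v1 + f u v2) /\
  (forall (k : K) u v, f u (k *: v) = k *: f u v).

Definition bounded_bilinear (U V W : normedModType K) (f : U -> V -> W) : Prop :=
  bilinear_map f /\ exists M : K, forall u v, `|f u v| <= M * `|u| * `|v|.

Definition banach_algebra (A : completeNormedModType K) (mul : A -> A -> A) : Prop :=
  bilinear_map mul /\ associative mul /\
  (forall a b, `|mul a b| <= `|a| * `|b|).

Definition banach_bimodule (B : completeNormedModType K) (mulB : B -> B -> B)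
    (X : completeNormedModType K) (l : B -> X -> X) (r : X -> B -> X) : Prop :=
  bounded_bilinear l /\ bounded_bilinear r /\
  (forall a b x, l (mulB a b) x = l a (l b x)) /\
  (forall a b x, r x (mulB a b) = r (r x a) b) /\
  (forall a b x, l a (r x b) = r (l a x) b).

Definition dual_elt (X : normedModType K) (f : X -> K) : Prop :=
  (forall x y, f (x + y) = f x + f y) /\
  (forall (k : K) x, f (k *: x) = k * f x) /\
  (exists M : K, forall x, `|f x| <= M * `|x|).

(* A bounded linear derivation D : A -> X^*, where X^* carries the dual
   module actions (a.f)(x) = f(x.a), (f.a)(x) = f(a.x); D a is the functional
   x |-> D a x.  D(ab) = D(a).b + a.D(b) reads D(ab)(x) = D(a)(b.x) + D(b)(x.a). *)
Definition dual_derivation (A : completeNormedModType K) (mulA : A -> A -> A)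
    (X : completeNormedModType K) (l : A -> X -> X) (r : X -> A -> X)
    (D : A -> X -> K) : Prop :=
  (forall a, dual_elt (D a)) /\
  (forall a b x, D (a + b) x = D a x + D b x) /\
  (forall (k : K) a x, D (k *: a) x = k * D a x) /\
  (exists M : K, forall a x, `|D a x| <= M * `|a| * `|x|) /\
  (forall a b x, D (mulA a b) x = D a (l b x) + D b (r x a)).

(* D is approximately inner: D(a) = lim_i (a.f_i - f_i.a) in the norm of X^*,
   for some net (f_i) in X^*.  Norm convergence in X^* is written out:
   ||D a - (a.f_i - f_i.a)|| <= eps, i.e. |...(x)| <= eps ||x|| for all x. *)
Definition approx_inner_dual (A : completeNormedModType K)
    (X : completeNormedModType K) (l : A -> X -> X) (r : X -> A -> X)
    (D : A -> X -> K) : Prop :=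
  exists (I : Type) (le : I -> I -> Prop) (f : I -> X -> K),
    directed le /\ (forall i, dual_elt (f i)) /\
    forall a (eps : K), 0 < eps -> exists i0, forall i, le i0 i ->
      forall x, `|D a x - (f i (r x a) - f i (l a x))| <= eps * `|x|.

Definition approx_amenable (A : completeNormedModType K) (mulA : A -> A -> A) : Prop :=
  forall (X : completeNormedModType K) (l : A -> X -> X) (r : X -> A -> X),
    banach_bimodule mulA l r ->
    forall D : A -> X -> K, dual_derivation mulA l r D -> approx_inner_dual l r D.

(* compatible actions of U (= frak A) on A *)
Definition compatible_actions (U A : completeNormedModType K)
    (mulA : A -> A -> A) (la : U -> A -> A) (ra : A -> U -> A) : Prop :=
  (forall al a b, la al (mulA a b) = mulA (la al a) b) /\
  (forall al a b, ra (mulA a b) al = mulA a (ra b al)).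

Definition left_essential (U A : completeNormedModType K) (la : U -> A -> A) : Prop :=
  forall (a : A) (eps : K), 0 < eps ->
    exists (n : nat) (c : 'I_n -> K) (al : 'I_n -> U) (b : 'I_n -> A),
      `|a - \sum_(i < n) c i *: la (al i) (b i)| < eps.

Definition right_essential (U A : completeNormedModType K) (ra : A -> U -> A) : Prop :=
  forall (a : A) (eps : K), 0 < eps ->
    exists (n : nat) (c : 'I_n -> K) (al : 'I_n -> U) (b : 'I_n -> A),
      `|a - \sum_(i < n) c i *: ra (b i) (al i)| < eps.

Definition banach_A_U_module (U : completeNormedModType K) (mulU : U -> U -> U)
    (A : completeNormedModType K) (mulA : A -> A -> A)
    (la : U -> A -> A) (ra : A -> U -> A)
    (X : completeNormedModType K) (l : A -> X -> X) (r : X -> A -> X)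
    (lu : U -> X -> X) (ru : X -> U -> X) : Prop :=
  banach_bimodule mulA l r /\ banach_bimodule mulU lu ru /\
  (forall al a x, lu al (l a x) = l (la al a) x) /\
  (forall al a x, l a (lu al x) = l (ra a al) x) /\
  (forall al a x, l a (ru x al) = ru (l a x) al) /\
  (forall al a x, r (lu al x) a = lu al (r x a)) /\
  (forall al a x, r (ru x al) a = r x (la al a)) /\
  (forall al a x, ru (r x a) al = r x (ra a al)).

Definition commutative_U_module (U X : completeNormedModType K)
    (lu : U -> X -> X) (ru : X -> U -> X) : Prop :=
  forall al x, lu al x = ru x al.

(* module derivation: additive (not assumed K-linear), bounded, Leibniz,
   U-module map *)
Definition module_derivation (U A : completeNormedModType K) (mulA : A -> A -> A)
    (la : U -> A -> A) (ra : A -> U -> A)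
    (X : completeNormedModType K) (l : A -> X -> X) (r : X -> A -> X)
    (lu : U -> X -> X) (ru : X -> U -> X) (D : A -> X) : Prop :=
  (forall a b, D (a + b) = D a + D b) /\
  (exists M : K, forall a, `|D a| <= M * `|a|) /\
  (forall a b, D (mulA a b) = r (D a) b + l a (D b)) /\
  (forall al a, D (la al a) = lu al (D a)) /\
  (forall al a, D (ra a al) = ru (D a) al).

Definition approx_inner (A X : completeNormedModType K)
    (l : A -> X -> X) (r : X -> A -> X) (D : A -> X) : Prop :=
  exists (I : Type) (le : I -> I -> Prop) (x : I -> X),
    directed le /\
    forall a (eps : K), 0 < eps -> exists i0, forall i, le i0 i ->
      `|D a - (l a (x i) - r (x i) a)| <= eps.

Definition module_approx_contractible (U : completeNormedModType K)
    (mulU : U -> U -> U) (A : completeNormedModType K) (mulA : A -> A -> A)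
    (la : U -> A -> A) (ra : A -> U -> A) : Prop :=
  forall (X : completeNormedModType K) (l : A -> X -> X) (r : X -> A -> X)
         (lu : U -> X -> X) (ru : X -> U -> X),
    banach_A_U_module mulU mulA la ra l r lu ru ->
    commutative_U_module lu ru ->
    forall D : A -> X, module_derivation mulA la ra l r lu ru D ->
      approx_inner l r D.

End Defs.

(* Main.v *)
Require Import Defs.
From HB Require Import structures.
From mathcomp Require Import all_boot all_order all_algebra.
From mathcomp Require Import all_classical all_reals all_analysis.
From mathcomp Require Import complex.
From mathcomp Require Import ring lra.
Import numFieldNormedType.Exports.
Import Order.TTheory GRing.Theory Num.Theory.
Local Open Scope classical_set_scope.
Local Open Scope ring_scope.
Local Open Scope complex_scope.
Set Implicit Arguments.
Unset Strict Implicit.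
Unset Printing Implicit Defensive.

Section Prelim.
Variable R : realType.
Local Notation C := R[i].
Local Notation Re := (@complex.Re R).
Local Notation Im := (@complex.Im R).

Lemma ge0_RC (z : C) : 0 <= z -> z = (Re z)%:C.
Proof.
rewrite lecE => /andP[/eqP H _]; case: z H => a b /= ->. by [].
Qed.

Lemma normC_real (a : R) : `|a%:C| = `|a|%:C.
Proof. by rewrite normc_def /= expr0n addr0 sqrtr_sqr. Qed.

Lemma CD (a b : R) : (a + b)%:C = a%:C + b%:C.
Proof. by rewrite rmorphD. Qed.
Lemma CM (a b : R) : (a * b)%:C = a%:C * b%:C.
Proof. by rewrite rmorphM. Qed.
Lemma CN (a : R) : (- a)%:C = - a%:C.
Proof. by rewrite rmorphN. Qed.
Lemma CB (a b : R) : (a - b)%:C = a%:C - b%:C.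
Proof. by rewrite rmorphB. Qed.
Lemma CV (a : R) : (a^-1)%:C = (a%:C)^-1.
Proof. by rewrite fmorphV. Qed.
Lemma Cle (a b : R) : (a%:C <= b%:C) = (a <= b).
Proof. exact: lecR. Qed.
Lemma Clt (a b : R) : (a%:C < b%:C) = (a < b).
Proof. by rewrite ltcE /= eqxx. Qed.
Lemma C0 : (0 : R)%:C = 0. Proof. by []. Qed.
Lemma C1 : (1 : R)%:C = 1. Proof. by []. Qed.

Lemma normC_ReIm (z : C) : `|z| <= `|Re z|%:C + `|Im z|%:C.
Proof.
rewrite {1}[z]complexE. rewrite (le_trans (ler_normD _ _))//.
by rewrite normrM normC_real normC_real normc_def /= expr0n add0r expr1n sqrtr1 mul1r.
Qed.

Lemma Re_le_norm (z : C) : (Re z)%:C <= `|z|.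
Proof. apply: le_trans (normc_ge_Re z). by rewrite Cle ler_norm. Qed.

Lemma Re_ge0 (z : C) : 0 <= z -> 0 <= Re z.
Proof. by rewrite lecE => /andP[]. Qed.
Lemma Re_norm_ge0 (z : C) : 0 <= Re `|z|.
Proof. exact/Re_ge0/normr_ge0. Qed.
Lemma normCE (z : C) : `|z| = (Re `|z|)%:C.
Proof. exact/ge0_RC/normr_ge0. Qed.

End Prelim.
Section Dual.
Variable R : realType.
Local Notation C := R[i].
Local Notation Re := (@complex.Re R).
Local Notation Im := (@complex.Im R).
Variable X : normedModType C.

Record dual := Dual {
  dfun :> X -> C;
  dfunD : forall x y, dfun (x + y) = dfun x + dfun y;
  dfunZ : forall (k : C) x, dfun (k *: x) = k * dfun x;
  dfunB : exists M : R, 0 <= M /\ forall x, `|dfun x| <= M%:C * `|x| }.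

Lemma dual_ext (f g : dual) : (forall x, f x = g x) -> f = g.
Proof.
case: f g => f fD fZ fB [g gD gZ gB] /= H.
have E : f = g by apply: funext.
subst g. by rewrite (Prop_irrelevance fD gD) (Prop_irrelevance fZ gZ) (Prop_irrelevance fB gB).
Qed.

Lemma dfun0 (f : dual) : f 0 = 0.
Proof. by apply: (@addrI _ (f 0)); rewrite addr0 -dfunD addr0. Qed.

Lemma dfunN (f : dual) x : f (- x) = - f x.
Proof. by rewrite -scaleN1r dfunZ mulN1r. Qed.

Lemma dfunB' (f : dual) x y : f (x - y) = f x - f y.
Proof. by rewrite dfunD dfunN. Qed.

Lemma dzero_D (x y : X) : (fun _ : X => (0:C)) (x + y) = (fun _ => 0) x + (fun _ : X => (0:C)) y.
Proof. by rewrite addr0. Qed.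
Lemma dzero_Z (k : C) (x : X) : (fun _ : X => (0:C)) (k *: x) = k * (fun _ : X => (0:C)) x.
Proof. by rewrite mulr0. Qed.
Lemma dzero_B : exists M : R, 0 <= M /\ forall x : X, `|(fun _ : X => (0:C)) x| <= M%:C * `|x|.
Proof. by exists 0; split => // x; rewrite normr0 mul0r. Qed.
Definition dzero : dual := Dual dzero_D dzero_Z dzero_B.

Section ops.
Variables (f g : dual) (k : C).
Lemma dopp_D x y : (fun x => - f x) (x + y) = (fun x => - f x) x + (fun x => - f x) y.
Proof. by rewrite /= dfunD opprD. Qed.
Lemma dopp_Z (c : C) x : (fun x => - f x) (c *: x) = c * (fun x => - f x) x.
Proof. by rewrite /= dfunZ mulrN. Qed.
Lemma dopp_B : exists M : R, 0 <= M /\ forall x, `|(fun x => - f x) x| <= M%:C * `|x|.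
Proof. case: (dfunB f) => M [M0 HM]; exists M; split => // x. by rewrite normrN. Qed.
Definition dopp : dual := Dual dopp_D dopp_Z dopp_B.

Lemma dadd_D x y : (fun x => f x + g x) (x + y) = (fun x => f x + g x) x + (fun x => f x + g x) y.
Proof. by rewrite /= !dfunD addrACA. Qed.
Lemma dadd_Z (c : C) x : (fun x => f x + g x) (c *: x) = c * (fun x => f x + g x) x.
Proof. by rewrite /= !dfunZ mulrDr. Qed.
Lemma dadd_B : exists M : R, 0 <= M /\ forall x, `|(fun x => f x + g x) x| <= M%:C * `|x|.
Proof.
case: (dfunB f) => M [M0 HM]; case: (dfunB g) => N [N0 HN]; exists (M + N); split.
  by rewrite addr_ge0.
move=> x; rewrite (le_trans (ler_normD _ _))// CD mulrDl. exact: lerD.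
Qed.
Definition dadd : dual := Dual dadd_D dadd_Z dadd_B.

Lemma dscale_D x y : (fun x => k * f x) (x + y) = (fun x => k * f x) x + (fun x => k * f x) y.
Proof. by rewrite /= dfunD mulrDr. Qed.
Lemma dscale_Z (c : C) x : (fun x => k * f x) (c *: x) = c * (fun x => k * f x) x.
Proof. by rewrite /= dfunZ mulrCA. Qed.
Lemma dscale_B : exists M : R, 0 <= M /\ forall x, `|(fun x => k * f x) x| <= M%:C * `|x|.
Proof.
case: (dfunB f) => M [M0 HM]; exists (Re `|k| * M); split.
  by rewrite mulr_ge0 // Re_norm_ge0.
move=> x; rewrite /= normrM CM -normCE -mulrA ler_wpM2l //.
Qed.
Definition dscale0 : dual := Dual dscale_D dscale_Z dscale_B.
End ops.
Definition dscale (k : C) (f : dual) : dual := dscale0 f k.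

Lemma daddA : associative dadd.
Proof. by move=> f g h; apply: dual_ext => x /=; rewrite addrA. Qed.
Lemma daddC : commutative dadd.
Proof. by move=> f g; apply: dual_ext => x /=; rewrite addrC. Qed.
Lemma dadd0 : left_id dzero dadd.
Proof. by move=> f; apply: dual_ext => x /=; rewrite add0r. Qed.
Lemma daddN : left_inverse dzero dopp dadd.
Proof. by move=> f; apply: dual_ext => x /=; rewrite addNr. Qed.

HB.instance Definition _ := gen_eqMixin dual.
HB.instance Definition _ := gen_choiceMixin dual.
HB.instance Definition _ := GRing.isZmodule.Build dual daddA daddC dadd0 daddN.

Lemma dscaleA a b (f : dual) : dscale a (dscale b f) = dscale (a * b) f.
Proof. by apply: dual_ext => x /=; rewrite mulrA. Qed.
Lemma dscale1 : left_id 1 dscale.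
Proof. by move=> f; apply: dual_ext => x /=; rewrite mul1r. Qed.
Lemma dscaleDr : right_distributive dscale (@GRing.add dual).
Proof. by move=> k f g; apply: dual_ext => x /=; rewrite mulrDr. Qed.
Lemma dscaleDl (f : dual) : {morph dscale^~ f : a b / a + b}.
Proof. by move=> a b; apply: dual_ext => x /=; rewrite mulrDl. Qed.

HB.instance Definition _ := GRing.Zmodule_isLmodule.Build C dual dscaleA dscale1 dscaleDr dscaleDl.

Lemma dualE0 x : (0 : dual) x = 0. Proof. by []. Qed.
Lemma dualED (f g : dual) x : (f + g) x = f x + g x. Proof. by []. Qed.
Lemma dualEN (f : dual) x : (- f) x = - f x. Proof. by []. Qed.
Lemma dualEZ k (f : dual) x : (k *: f) x = k * f x. Proof. by []. Qed.

End Dual.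
Section DualNorm.
Variable R : realType.
Local Notation C := R[i].
Local Notation Re := (@complex.Re R).
Local Notation Im := (@complex.Im R).
Variable X : normedModType C.
Local Notation dual := (dual X).

Lemma normXE (x : X) : `|x| = (Re `|x|)%:C.
Proof. exact/ge0_RC/normr_ge0. Qed.
Lemma ReX_ge0 (x : X) : 0 <= Re `|x|.
Proof. exact/Re_ge0/normr_ge0. Qed.

Lemma bnd_iff (z : C) (M : R) (x : X) :
  (`|z| <= M%:C * `|x|) = (Re `|z| <= M * Re `|x|).
Proof. by rewrite normCE normXE -CM Cle. Qed.

Definition bset (f : dual) : set R := fun M => 0 <= M /\ forall x, Re `|f x| <= M * Re `|x|.
Definition dnormR (f : dual) : R := inf (bset f).

Lemma bset_n0 (f : dual) : bset f !=set0.
Proof.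
case: (dfunB f) => M [M0 HM]; exists M; split => // x. by rewrite -bnd_iff.
Qed.
Lemma bset_lb (f : dual) : has_lbound (bset f).
Proof. by exists 0 => M []. Qed.

Lemma dnormR_ge0 (f : dual) : 0 <= dnormR f.
Proof. by apply: lb_le_inf; [exact: bset_n0| move=> M []]. Qed.

Lemma dnormR_le (f : dual) M : 0 <= M -> (forall x, Re `|f x| <= M * Re `|x|) -> dnormR f <= M.
Proof. move=> M0 HM; apply: ge_inf; [exact: bset_lb | by split]. Qed.

Lemma dnormR_bound (f : dual) x : Re `|f x| <= dnormR f * Re `|x|.
Proof.
have [x0|xn0] := eqVneq (Re `|x|) 0.
  have := etrans (normXE x) (congr1 (fun t : R => t%:C) x0); move=> /normr0_eq0 ->; by rewrite dfun0 !normr0 mulr0.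
have xp : 0 < Re `|x| by rewrite lt_neqAle eq_sym xn0 ReX_ge0.
rewrite -ler_pdivrMr //; apply: lb_le_inf; first exact: bset_n0.
move=> M [M0 HM]; rewrite ler_pdivrMr //.
Qed.

Definition dnorm (f : dual) : C := (dnormR f)%:C.

Lemma ReN_D (z w : C) : Re `|z + w| <= Re `|z| + Re `|w|.
Proof. by have := ler_normD z w; rewrite (normCE (z+w)) (normCE z) (normCE w) -CD Cle. Qed.
Lemma ReN_M (z w : C) : Re `|z * w| = Re `|z| * Re `|w|.
Proof. by rewrite normrM [X in Re (X * _)]normCE [X in Re (_ * X)]normCE -CM. Qed.

Lemma dnormRD (f g : dual) : dnormR (f + g) <= dnormR f + dnormR g.
Proof.
apply: dnormR_le; first by rewrite addr_ge0 ?dnormR_ge0.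
move=> x; rewrite dualED (le_trans (ReN_D _ _)) // mulrDl.
by apply: lerD; apply: dnormR_bound.
Qed.


Lemma dnormR_scale_le k (f : dual) : dnormR (k *: f) <= Re `|k| * dnormR f.
Proof.
apply: dnormR_le; first by rewrite mulr_ge0 ?dnormR_ge0 ?Re_norm_ge0.
move=> x; rewrite dualEZ ReN_M -mulrA ler_wpM2l ?Re_norm_ge0 //; exact: dnormR_bound.
Qed.

Lemma dnormRZ k (f : dual) : dnormR (k *: f) = Re `|k| * dnormR f.
Proof.
apply/eqP; rewrite eq_le dnormR_scale_le.
have [->|kn0] := eqVneq k 0.
  by rewrite normr0 mul0r dnormR_ge0.
have := dnormR_scale_le k^-1 (k *: f); rewrite scalerA mulVf // scale1r.
have kp : 0 < Re `|k|.
  by rewrite -Clt -normCE normr_gt0.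
rewrite normrV ?unitfE // [X in Re (X^-1)]normCE -CV /= => H.
by rewrite -ler_pdivlMl // mulrC.
Qed.

Lemma dnormR0_eq0 (f : dual) : dnormR f = 0 -> f = 0.
Proof.
move=> H; apply: dual_ext => x; rewrite dualE0; apply/normr0_eq0.
have := dnormR_bound f x; rewrite H mul0r => H2.
by rewrite normCE; apply/eqP; rewrite -C0 (inj_eq (@complexI _)) eq_le H2 Re_norm_ge0.
Qed.

Lemma dnormD (f g : dual) : dnorm (f + g) <= dnorm f + dnorm g.
Proof. by rewrite /dnorm -CD Cle dnormRD. Qed.
Lemma dnormZ (l : C) (f : dual) : dnorm (l *: f) = `|l| * dnorm f.
Proof. by rewrite /dnorm dnormRZ CM -normCE. Qed.
Lemma dnorm0 (f : dual) : dnorm f = 0 -> f = 0.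
Proof. by move=> H; apply: dnormR0_eq0; move: H; rewrite /dnorm -C0 => /complexI. Qed.

HB.instance Definition _ := Lmodule_isNormed.Build C dual dnormD dnormZ dnorm0.

Lemma dual_normE (f : dual) : `|f| = (dnormR f)%:C.
Proof. by []. Qed.

End DualNorm.
Section Aux.
Variable R : realType.
Local Notation C := R[i].
Local Notation Re := (@complex.Re R).
Local Notation Im := (@complex.Im R).

Lemma ReB (z w : C) : Re (z - w) = Re z - Re w.
Proof. by case: z w => a b [c d]. Qed.
Lemma ImB (z w : C) : Im (z - w) = Im z - Im w.
Proof. by case: z w => a b [c d]. Qed.
Lemma ReD (z w : C) : Re (z + w) = Re z + Re w.
Proof. by case: z w => a b [c d]. Qed.

Lemma absRe_le (z : C) : `|Re z| <= Re `|z|.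
Proof. by rewrite -Cle -normCE normc_ge_Re. Qed.
Lemma absIm_le (z : C) : `|Im z| <= Re `|z|.
Proof.
have := absRe_le (z * 'i); rewrite ReiNIm normrN normrM.
rewrite (_ : `|'i| = 1 :> C) ?mulr1 //.
by rewrite normc_def /= expr0n expr1n add0r sqrtr1.
Qed.

Lemma ReN_ReIm (z : C) : Re `|z| <= `|Re z| + `|Im z|.
Proof. by rewrite -Cle -normCE CD normC_ReIm. Qed.

Lemma ReN_sym (z w : C) : Re `|z - w| = Re `|w - z|.
Proof. by rewrite distrC. Qed.

Lemma small_div (e K : R) : 0 < e -> 0 <= K -> e / (K + 1) * K < e.
Proof.
move=> e0 K0; have K1 : 0 < K + 1 by rewrite ltr_wpDl.
rewrite mulrAC ltr_pdivrMr // ltr_pM2l //. by rewrite ltrDl.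
Qed.

Lemma zero_of_small (z : C) (K : R) : 0 <= K ->
  (forall e : R, 0 < e -> Re `|z| <= e * K) -> z = 0.
Proof.
move=> K0 H; apply/normr0_eq0; rewrite normCE.
suff -> : Re `|z| = 0 by [].
apply/eqP; rewrite eq_le Re_norm_ge0 andbT; apply/ler_addgt0Pr => eps eps0.
rewrite add0r; have K1 : 0 < K + 1 by rewrite ltr_wpDl.
apply: (le_trans (H (eps / (K + 1)) _)); first by rewrite divr_gt0.
exact/ltW/small_div.
Qed.

Lemma real_lim (T : Type) (F : set_system T) (FF : ProperFilter F) (u : T -> R) :
  (forall e, 0 < e -> exists S, F S /\ forall s t, S s -> S t -> `|u s - u t| < e) ->
  exists l : R, forall e, 0 < e -> exists S, F S /\ forall s, S s -> `|u s - l| < e.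
Proof.
move=> H.
have cu : cauchy (u @ F).
  apply/cauchy_ballP => e e0; case: (H e e0) => S [FS HS].
  have FuS : F (u @^-1` (u @` S)) by apply: filterS FS => s Ss; exists s.
  exists (u @` S, u @` S); first by split.
  move=> [a b] /= [[s Ss <-] [t St <-]].
  by rewrite -ball_normE /ball_ /=; apply: HS.
have Hc0 : (u @ F) --> lim (u @ F) by apply: R_complete.
have Hc := proj1 (@cvgrPdist_lt _ _ _ F _ u (lim (u @ F))) Hc0.
exists (lim (u @ F)) => e e0; exists (u @^-1` [set y | `|lim (u @ F) - y| < e]); split.
  exact: Hc.
by move=> s /=; rewrite distrC.
Qed.

End Aux.
Section DualComplete.
Variable R : realType.
Local Notation C := R[i].
Local Notation Re := (@complex.Re R).
Local Notation Im := (@complex.Im R).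
Variable X : normedModType C.
Local Notation dual := (dual X).

Lemma dual_cauchy_sets (F : set_system dual) (FF : ProperFilter F) : cauchy F ->
  forall e : R, 0 < e -> exists S, F S /\ forall f g, S f -> S g -> dnormR (f - g) < e.
Proof.
move=> /cauchy_ballP H e e0.
have := H e%:C; rewrite Clt => /(_ e0) [[A B] [/= FA FB] sub].
exists (A `&` B); split; first exact: filterI.
move=> f g [Af Bf] [Ag Bg]; have := sub (f, g) (conj Af Bg).
by rewrite /= -ball_normE /ball_ /= dual_normE Clt.
Qed.

Lemma dual_app_sub (f g : dual) x : (f - g) x = f x - g x.
Proof. by []. Qed.

Lemma ReX_le (f : dual) x : Re `|f x| <= dnormR f * Re `|x|.
Proof. exact: dnormR_bound. Qed.

Lemma pointwise_lim (F : set_system dual) (FF : ProperFilter F) : cauchy F ->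
  forall x, exists l : C, forall e, 0 < e -> exists S, F S /\ forall f, S f -> Re `|f x - l| < e.
Proof.
move=> cF x.
have pc (proj : C -> R) (Hp : forall z, `|proj z| <= Re `|z|)
    (Hb : forall z w, proj (z - w) = proj z - proj w) :
    forall e, 0 < e -> exists S, F S /\ forall s t : dual, S s -> S t -> `|proj (s x) - proj (t x)| < e.
  move=> e e0; have n0 := ReX_ge0 x; have n1 : 0 < Re `|x| + 1 by rewrite ltr_wpDl.
  have [S [FS HS]] := dual_cauchy_sets FF cF (divr_gt0 e0 n1).
  exists S; split => // s t Ss St; rewrite -Hb -dual_app_sub.
  apply: (le_lt_trans (Hp _)); apply: (le_lt_trans (ReX_le _ _)).
  apply: (le_lt_trans _ (small_div e0 n0)); apply: ler_wpM2r => //.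
  exact/ltW/HS.
have [a Ha] := real_lim FF (pc _ (@absRe_le R) (@ReB R)).
have [b Hb] := real_lim FF (pc _ (@absIm_le R) (@ImB R)).
exists (a +i* b) => e e0.
have e2 : 0 < e / 2 by rewrite divr_gt0.
have [S1 [F1 H1]] := Ha _ e2; have [S2 [F2 H2]] := Hb _ e2.
exists (S1 `&` S2); split; first exact: filterI.
move=> f [s1 s2]; apply: (le_lt_trans (ReN_ReIm _)).
rewrite ReB ImB /= (splitr e); apply: ltrD; [exact: H1 | exact: H2].
Qed.

Lemma ReX_add (x y : X) : Re `|x + y| <= Re `|x| + Re `|y|.
Proof. by have := ler_normD x y; rewrite (normXE (x + y)) (normXE x) (normXE y) -CD Cle. Qed.
Lemma ReX_scale (k : C) (x : X) : Re `|k *: x| = Re `|k| * Re `|x|.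
Proof. by rewrite normrZ [X in Re (X * _)]normCE [X in Re (_ * X)]normXE -CM. Qed.

Lemma dual_complete (F : set_system dual) : ProperFilter F -> cauchy F -> cvg F.
Proof.
move=> FF cF.
have [g Hg] := choice (pointwise_lim FF cF).
have E : forall e, 0 < e -> exists S, F S /\ forall f x, S f -> Re `|f x - g x| <= e * Re `|x|.
  move=> e e0; have [S [FS HS]] := dual_cauchy_sets FF cF e0.
  exists S; split => // f x Sf; apply/ler_addgt0Pr => eps eps0.
  have [S' [FS' HS']] := Hg x eps eps0.
  have [h [Sh S'h]] := filter_ex (filterI FS FS').
  rewrite -(subrK (h x) (f x)) -addrA; apply: (le_trans (ReN_D _ _)).
  apply: lerD; last exact/ltW/HS'.
  rewrite -dual_app_sub; apply: (le_trans (ReX_le _ _)); apply: ler_wpM2r.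
    exact: ReX_ge0.
  exact/ltW/HS.
have [f0 _] : exists f0 : dual, True.
  by have [S [FS _]] := E 1 ltr01; have [f0 _] := filter_ex FS; exists f0.
have gD : forall x y, g (x + y) = g x + g y.
  move=> x y; apply/eqP; rewrite -subr_eq0; apply/eqP.
  apply: (@zero_of_small _ _ (Re `|x + y| + Re `|x| + Re `|y|)).
    by rewrite !addr_ge0 ?ReX_ge0.
  move=> e e0; have [S [FS HS]] := E e e0; have [f Sf] := filter_ex FS.
  have -> : g (x + y) - (g x + g y) = (f x - g x) + (f y - g y) - (f (x + y) - g (x + y)).
    by rewrite dfunD; ring.
  rewrite !mulrDr; apply: (le_trans (ReN_D _ _)); rewrite normrN addrC.
  rewrite -[in X in _ <= X]addrA.
  apply: lerD; first exact: HS.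
  by apply: (le_trans (ReN_D _ _)); apply: lerD; apply: HS.
have gZ : forall (k : C) x, g (k *: x) = k * g x.
  move=> k x; apply/eqP; rewrite -subr_eq0; apply/eqP.
  apply: (@zero_of_small _ _ (Re `|k *: x| + Re `|k| * Re `|x|)).
    by rewrite !addr_ge0 ?mulr_ge0 ?ReX_ge0 ?Re_norm_ge0.
  move=> e e0; have [S [FS HS]] := E e e0; have [f Sf] := filter_ex FS.
  have -> : g (k *: x) - k * g x = k * (f x - g x) - (f (k *: x) - g (k *: x)).
    by rewrite dfunZ; ring.
  rewrite [in X in _ <= X]mulrDr; apply: (le_trans (ReN_D _ _)); rewrite normrN addrC.
  apply: lerD; first exact: HS.
  rewrite ReN_M mulrCA; apply: ler_wpM2l; first exact: Re_norm_ge0.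
  exact: HS.
have gB : exists M : R, 0 <= M /\ forall x, `|g x| <= M%:C * `|x|.
  have [S [FS HS]] := E 1 ltr01; have [f Sf] := filter_ex FS.
  exists (dnormR f + 1); split; first by rewrite addr_ge0 ?dnormR_ge0.
  move=> x; rewrite bnd_iff.
  have -> : g x = f x + (g x - f x) by rewrite addrC subrK.
  apply: (le_trans (ReN_D _ _)); rewrite mulrDl mul1r; apply: lerD.
    exact: ReX_le.
  by rewrite -ReN_sym -(mul1r (Re `|x|)); apply: HS.
pose G : dual := Dual gD gZ gB.
apply/cvg_ex; exists G.
apply/(@cvgrPdist_le _ _ _ F _ id G) => eps eps0.
have ep : 0 < Re eps by rewrite -Clt -ge0_RC // ltW.
have [S [FS HS]] := E _ ep.
apply: filterS FS => f Sf.
rewrite dual_normE (ge0_RC (ltW eps0)) Cle; apply: dnormR_le; first exact: ltW.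
move=> x; rewrite dual_app_sub ReN_sym; exact: HS.
Qed.

HB.instance Definition _ := Uniform_isComplete.Build dual dual_complete.

End DualComplete.
Section HahnBanach.
Variable R : realType.
Local Notation C := R[i].
Variable V : lmodType C.

Definition rs (t : R) (v : V) : V := t%:C *: v.

Lemma rsA s t v : rs s (rs t v) = rs (s * t) v.
Proof. by rewrite /rs scalerA CM. Qed.
Lemma rsDr t u v : rs t (u + v) = rs t u + rs t v.
Proof. by rewrite /rs scalerDr. Qed.
Lemma rsDl s t v : rs (s + t) v = rs s v + rs t v.
Proof. by rewrite /rs CD scalerDl. Qed.
Lemma rs1 v : rs 1 v = v.
Proof. by rewrite /rs C1 scale1r. Qed.
Lemma rs0 v : rs 0 v = 0.
Proof. by rewrite /rs C0 scale0r. Qed.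
Lemma rsN1 v : rs (-1) v = - v.
Proof. by rewrite /rs CN C1 scaleN1r. Qed.
Lemma rsB s t v : rs (s - t) v = rs s v - rs t v.
Proof. by rewrite /rs CB scalerBl. Qed.
Lemma rsBr t u v : rs t (u - v) = rs t u - rs t v.
Proof. by rewrite /rs scalerBr. Qed.
Lemma rsv0 t : rs t 0 = 0.
Proof. by rewrite /rs scaler0. Qed.

Variable p : V -> R.
Hypothesis pD : forall u v, p (u + v) <= p u + p v.
Hypothesis pZ : forall t v, 0 <= t -> p (rs t v) = t * p v.

Definition good (G : set (V * R)) :=
  [/\ (forall v y z, G (v, y) -> G (v, z) -> y = z),
      (forall v w y z, G (v, y) -> G (w, z) -> G (v + w, y + z)),
      (forall t v y, G (v, y) -> G (rs t v, t * y)),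
      (forall v y, G (v, y) -> y <= p v) &
      G (0, 0)].

Lemma p0 : p 0 = 0.
Proof. by have := @pZ 0 0 (lexx 0); rewrite rs0 mul0r. Qed.

Lemma good_sub (G : set (V * R)) u v y z : good G -> G (u, y) -> G (v, z) -> G (u - v, y - z).
Proof.
case=> _ ga gs _ _ Gu Gv; have := ga _ _ _ _ Gu (gs (-1) _ _ Gv).
by rewrite rsN1 mulN1r.
Qed.

Lemma extend (G : set (V * R)) (v1 : V) : good G -> ~ (exists y, G (v1, y)) ->
  exists G', good G' /\ G `<=` G' /\ exists y, G' (v1, y).
Proof.
move=> gG; have [gf ga gs gp g0] := gG => nv1.
pose E : set R := fun r => exists w z, G (w, z) /\ r = z - p (w - v1).
have Ei : forall u y w z, G (u, y) -> G (w, z) -> z - p (w - v1) <= p (u + v1) - y.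
  move=> u y w z Gu Gw; suff H : y + z <= p (u + v1) + p (w - v1) by lra.
  apply: (le_trans (gp _ _ (ga _ _ _ _ Gu Gw))).
  have -> : u + w = (u + v1) + (w - v1) by rewrite addrACA subrr addr0.
  exact: pD.
have En : E !=set0 by exists (0 - p (0 - v1)), 0, 0.
have Eub : has_ubound E.
  exists (p (0 + v1) - 0) => r [w [z [Gw ->]]]; exact: Ei.
pose m := sup E.
have m_le : forall u y, G (u, y) -> m <= p (u + v1) - y.
  move=> u y Gu; apply: ge_sup => // r [w [z [Gw ->]]]; exact: Ei.
have m_ge : forall w z, G (w, z) -> z - p (w - v1) <= m.
  move=> w z Gw; apply: ub_le_sup => //; by exists w, z.
pose G' : set (V * R) := fun vy => exists u y s, G (u, y) /\ vy = (u + rs s v1, y + s * m).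
exists G'; split; last split.
- split.
  + move=> v y z [u [y1 [s [Gu [-> ->]]]]] [u' [y1' [s' [Gu' [e ->]]]]].
    have [ss'|ss'] := eqVneq s s'.
      subst s'; move/addIr: e => eu; subst u'.
      by rewrite (gf _ _ _ Gu Gu').
    exfalso; apply: nv1.
    have Gd := good_sub gG Gu' Gu.
    have : v1 = rs ((s - s')^-1) (u' - u).
      have -> : u' - u = rs (s - s') v1.
        rewrite rsB; apply: (addIr (u + rs s' v1)).
        by rewrite addrA subrK [RHS]addrCA subrK e.
      by rewrite rsA mulVf ?rs1 // subr_eq0.
    move=> ->; eexists; exact: gs _ _ _ Gd.
  + move=> v w y z [u [y1 [s [Gu [-> ->]]]]] [u' [y1' [s' [Gu' [-> ->]]]]].
    exists (u + u'), (y1 + y1'), (s + s'); split; first exact: ga.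
    by congr pair; [rewrite rsDl addrACA | ring].
  + move=> t v y [u [y1 [s [Gu [-> ->]]]]].
    exists (rs t u), (t * y1), (t * s); split; first exact: gs.
    by congr pair; [rewrite rsDr rsA | ring].
  + move=> v y [u [y1 [s [Gu [-> ->]]]]].
    have pos : forall s, 0 < s -> y1 + s * m <= p (u + rs s v1).
      move=> t t0; have := m_le _ _ (gs t^-1 _ _ Gu) => H.
      have := ler_wpM2l (ltW t0) H.
      have -> : t * (p (rs t^-1 u + v1) - t^-1 * y1) = p (u + rs t v1) - y1.
        rewrite mulrBr mulrA mulfV ?gt_eqF // mul1r -pZ ?ltW //.
        by rewrite rsDr rsA mulfV ?gt_eqF // rs1.
      move=> H2; lra.
    have neg : forall s, s < 0 -> y1 + s * m <= p (u + rs s v1).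
      move=> t t0; have sgp : 0 < - t by rewrite oppr_gt0.
      have := m_ge _ _ (gs (- t)^-1 _ _ Gu) => H.
      have := ler_wpM2l (ltW sgp) H.
      have -> : - t * ((- t)^-1 * y1 - p (rs (- t)^-1 u - v1)) = y1 - p (u + rs t v1).
        rewrite mulrBr mulrA mulfV ?gt_eqF // mul1r -pZ ?ltW //.
        rewrite rsDr rsA mulfV ?gt_eqF // rs1 -rsN1 rsA.
        by rewrite mulrN1 opprK.
      move=> H2; lra.
    have [s0|s0] := boolP (0 < s); first exact: pos.
    have [s1|s1] := boolP (s < 0); first exact: neg.
    have -> : s = 0 by apply/eqP; rewrite eq_le !leNgt s0 s1.
    by rewrite rs0 addr0 mul0r addr0; exact: gp.
  + by exists 0, 0, 0; split => //; rewrite rs0 addr0 mul0r addr0.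
- move=> [v y] Gv; exists v, y, 0; split => //.
  by rewrite rs0 addr0 mul0r addr0.
- exists (0 + 1 * m), 0, 0, 1; split; first exact: g0.
  by rewrite rs1 !add0r.
Qed.

Lemma HB_ext (G0 : set (V * R)) : good G0 ->
  exists F : V -> R, [/\ (forall v w, F (v + w) = F v + F w),
    (forall t v, F (rs t v) = t * F v),
    (forall v, F v <= p v) &
    (forall v y, G0 (v, y) -> F v = y)].
Proof.
move=> gG0.
pose T := {G : set (V * R) | good G /\ G0 `<=` G}.
pose t0 : T := exist _ G0 (conj gG0 (@subset_refl _ G0)).
pose Rel (a b : T) : bool := `[< sval a `<=` sval b >].
have Rrefl : forall a, Rel a a by move=> a; apply/asboolP.
have Rtrans : forall a b c, Rel a b -> Rel b c -> Rel a c.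
  by move=> a b c /asboolP ab /asboolP bc; apply/asboolP; exact: subset_trans bc.
have Rchain : forall A : set T, total_on A (fun a b => Rel a b) -> exists t, forall s, A s -> Rel s t.
  move=> A tA; case: (pselect (exists s, A s)) => [[s0 As0]|nA]; last first.
    by exists t0 => s As; exfalso; apply: nA; exists s.
  pose U : set (V * R) := fun vy => exists s, A s /\ sval s vy.
  have two : forall s1 s2 vy1 vy2, A s1 -> A s2 -> sval s1 vy1 -> sval s2 vy2 ->
      exists s, A s /\ sval s vy1 /\ sval s vy2.
    move=> s1 s2 vy1 vy2 A1 A2 H1 H2; case: (tA _ _ A1 A2) => /asboolP sub.
      by exists s2; split => //; split => //; apply: sub.
    by exists s1; split => //; split => //; apply: sub.
  have gU : good U.
    split.
    - move=> v y z [s1 [A1 H1]] [s2 [A2 H2]].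
      have [s [_ [K1 K2]]] := two _ _ _ _ A1 A2 H1 H2.
      case: (svalP s) => [[gf _ _ _ _] _]; exact: gf K1 K2.
    - move=> v w y z [s1 [A1 H1]] [s2 [A2 H2]].
      have [s [As [K1 K2]]] := two _ _ _ _ A1 A2 H1 H2.
      case: (svalP s) => [[_ ga _ _ _] _]; exists s; split => //; exact: ga K1 K2.
    - move=> t v y [s [As H]]; case: (svalP s) => [[_ _ gs _ _] _].
      by exists s; split => //; exact: gs.
    - move=> v y [s [As H]]; case: (svalP s) => [[_ _ _ gp _] _]; exact: gp.
    - by case: (svalP s0) => [[_ _ _ _ g0] _]; exists s0.
  have sU : G0 `<=` U by move=> vy H; exists s0; split => //; case: (svalP s0) => _; apply.
  exists (exist _ U (conj gU sU)) => s As; apply/asboolP => vy H; by exists s.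
have [Gm Hmax] := @ZL_preorder T t0 Rel Rrefl Rtrans Rchain.
case: (svalP Gm) => gGm sGm.
have tot : forall v, exists y, sval Gm (v, y).
  move=> v; case: (pselect (exists y, sval Gm (v, y))) => // nv.
  have [G' [gG' [sub [y Gy]]]] := extend gGm nv.
  pose s' : T := exist _ G' (conj gG' (subset_trans sGm sub)).
  have R1 : Rel Gm s' by apply/asboolP.
  have /asboolP := Hmax s' R1.
  by move=> /(_ (v, y) Gy) H; exfalso; apply: nv; exists y.
pose F v := sval (cid (tot v)).
have FP : forall v, sval Gm (v, F v) by move=> v; rewrite /F; case: cid.
case: gGm => gf ga gs gp g0.
exists F; split.
- by move=> v w; apply: (gf (v + w)); [exact: FP | exact: ga].
- by move=> t v; apply: (gf (rs t v)); [exact: FP | exact: gs].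
- by move=> v; apply: gp.
- by move=> v y /sGm H; exact: gf (FP v) H.
Qed.

End HahnBanach.
Section Sep.
Variable R : realType.
Local Notation C := R[i].
Local Notation Re := (@complex.Re R).
Local Notation Im := (@complex.Im R).
Variable X : normedModType C.
Variable n : nat.
Local Notation V := ('I_n -> X).
Variable delta : X -> V.
Hypothesis deltaD : forall x y, delta (x + y) = delta x + delta y.
Hypothesis deltaZ : forall (k : C) x, delta (k *: x) = k *: delta x.
Variable v0 : V.
Variable e : R.
Hypothesis e0 : 0 < e.
Hypothesis far : forall x, exists k, e < Re `|v0 k - delta x k|.

Definition Nsum (v : V) : R := \sum_(k < n) Re `|v k|.

Lemma NsumD u v : Nsum (u + v) <= Nsum u + Nsum v.
Proof. rewrite /Nsum -big_split /=; apply: ler_sum => k _; exact: ReX_add. Qed.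

Lemma NsumZ (c : C) v : Nsum (c *: v) = Re `|c| * Nsum v.
Proof. rewrite /Nsum mulr_sumr; apply: eq_bigr => k _; exact: ReX_scale. Qed.

Lemma Nsum_ge0 v : 0 <= Nsum v.
Proof. by apply: sumr_ge0 => k _; exact: ReX_ge0. Qed.

Lemma Re_normC_real (t : R) : Re `|t%:C| = `|t|.
Proof. by rewrite normC_real. Qed.

Lemma NsumR t v : 0 <= t -> Nsum (rs t v) = t * Nsum v.
Proof. by move=> t0; rewrite /rs NsumZ Re_normC_real ger0_norm. Qed.

Lemma Nsum_far x : e < Nsum (v0 - delta x).
Proof.
have [k Hk] := far x; apply: (lt_le_trans Hk).
rewrite /Nsum (bigD1 k) //= lerDl; apply: sumr_ge0 => j _; exact: ReX_ge0.
Qed.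

Lemma delta0 : delta 0 = 0.
Proof. by apply: (@addrI _ (delta 0)); rewrite -deltaD !addr0. Qed.

Lemma deltaB x y : delta (x - y) = delta x - delta y.
Proof. by apply: (addIr (delta y)); rewrite -deltaD !subrK. Qed.

Lemma deltaR t x : delta (t%:C *: x) = rs t (delta x).
Proof. exact: deltaZ. Qed.

Definition G0 : set (V * R) := fun vy => exists x t, vy = (delta x + rs t v0, t * e).

Lemma good_G0 : good Nsum G0.
Proof.
split.
- move=> v y z [x [t [ev ->]]] [x' [t' [ev' ->]]].
  have [tt'|tt'] := eqVneq t t'; first by rewrite tt'.
  exfalso.
  have E1 : rs (t - t') v0 = delta (x' - x).
    rewrite rsB deltaB.
    apply: (addIr (delta x + rs t' v0)).
    by rewrite [LHS]addrCA subrK [RHS]addrA subrK -ev -ev'.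
  have E2 : v0 = delta (((t - t')^-1)%:C *: (x' - x)).
    by rewrite deltaR -E1 rsA mulVf ?subr_eq0 // rs1.
  have := Nsum_far (((t - t')^-1)%:C *: (x' - x)); rewrite -E2 subrr.
  rewrite /Nsum big1 => [|k _]; first by rewrite ltNge ltW.
  by rewrite (_ : (0 : V) k = 0) // normr0.
- move=> v w y z [x [t [-> ->]]] [x' [t' [-> ->]]].
  exists (x + x'), (t + t'); congr pair; last by rewrite mulrDl.
  by rewrite deltaD rsDl addrACA.
- move=> c v y [x [t [-> ->]]].
  exists (c%:C *: x), (c * t); congr pair; last by rewrite mulrA.
  by rewrite rsDr deltaR rsA.
- move=> v y [x [t [-> ->]]].
  have [tp|tn] := boolP (0 < t); last first.
    apply: (le_trans _ (Nsum_ge0 _)); apply: mulr_le0_ge0; [by rewrite leNgt | exact: ltW].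
  have -> : delta x + rs t v0 = rs t (v0 - delta ((- t^-1)%:C *: x)).
    by rewrite deltaR rsBr rsA mulrN mulfV ?gt_eqF // rsN1 opprK addrC.
  rewrite (NsumR _ (ltW tp)) ler_pM2l //; exact/ltW/Nsum_far.
- by exists 0, 0; rewrite delta0 rs0 add0r mul0r.
Qed.


Lemma ii : 'i%C * 'i%C = -1 :> C.
Proof. apply/eqP; rewrite eq_complex /=; apply/andP; split; apply/eqP; ring. Qed.
Lemma norm_i : `|'i%C| = 1 :> C.
Proof. by rewrite normc_def /= expr0n expr1n add0r sqrtr1. Qed.

Lemma sep_functional : exists psi : V -> C,
  [/\ (forall u v, psi (u + v) = psi u + psi v),
      (forall (k : C) v, psi (k *: v) = k * psi v),
      (forall v, Re `|psi v| <= Nsum v + Nsum v),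
      (forall x, psi (delta x) = 0) &
      Re (psi v0) = e].
Proof.
have [F [FD FR Fp FG]] := HB_ext NsumD NsumR good_G0.
have FN : forall v, F (- v) = - F v by move=> v; rewrite -rsN1 FR mulN1r.
have Fabs : forall v, `|F v| <= Nsum v.
  move=> v; rewrite ler_norml Fp andbT lerNl -FN.
  by rewrite (le_trans (Fp _)) // -scaleN1r NsumZ normrN normr1 mul1r.
have Fdelta : forall x, F (delta x) = 0.
  by move=> x; apply: FG; exists x, 0; rewrite rs0 addr0 mul0r.
have Fv0 : F v0 = e.
  by apply: FG; exists 0, 1; rewrite delta0 add0r rs1 mul1r.
pose psi v := (F v)%:C - 'i%C * (F ('i%C *: v))%:C.
have psiD : forall u v, psi (u + v) = psi u + psi v.
  by move=> u v; rewrite /psi scalerDr !FD !CD; ring.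
have psiR : forall (t : R) v, psi (rs t v) = t%:C * psi v.
  move=> t v; rewrite /psi FR.
  have -> : 'i%C *: rs t v = rs t ('i%C *: v) by rewrite /rs !scalerA mulrC.
  by rewrite FR !CM; ring.
have psiI : forall v, psi ('i%C *: v) = 'i%C * psi v.
  move=> v; rewrite /psi scalerA ii scaleN1r FN CN.
  rewrite mulrBr mulrA ii; ring.
have psiZ : forall (k : C) v, psi (k *: v) = k * psi v.
  move=> k v.
  have -> : k *: v = rs (Re k) v + 'i%C *: rs (Im k) v.
    by rewrite /rs scalerA -scalerDl -complexE.
  rewrite psiD psiI !psiR {3}[k]complexE; ring.
exists psi; split => //.
- move=> v; apply: (le_trans (ReN_ReIm _)).
  have -> : Re (psi v) = F v by rewrite /psi /=; ring.
  have -> : Im (psi v) = - F ('i%C *: v) by rewrite /psi /=; ring.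
  rewrite normrN; apply: lerD => //.
  by rewrite (le_trans (Fabs _)) // NsumZ norm_i /= mul1r.
- by move=> x; rewrite /psi -deltaZ !Fdelta C0 mulr0 subrr.
- by rewrite /psi /= Fv0; ring.
Qed.

End Sep.
Section Misc.
Variable R : realType.
Local Notation C := R[i].
Local Notation Re := (@complex.Re R).

Lemma bb_real (U V W : normedModType C) (f : U -> V -> W) :
  (exists M : C, forall u v, `|f u v| <= M * `|u| * `|v|) ->
  exists M : R, 0 <= M /\ forall u v, Re `|f u v| <= M * Re `|u| * Re `|v|.
Proof.
case=> M HM; exists (Re `|M|); split; first exact: Re_norm_ge0.
move=> u v; have h := HM u v.
have pos : 0 <= M * `|u| * `|v| := le_trans (normr_ge0 _) h.
have : `|f u v| <= `|M| * `|u| * `|v|.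
  by rewrite -(normr_id u) -(normr_id v) -!normrM ger0_norm.
rewrite (normXE (f u v)) (normCE M) (normXE u) (normXE v) -!CM Cle //.
Qed.

Lemma common_index (I : Type) (le : I -> I -> Prop) (T : eqType) (P : T -> I -> Prop) (s : seq T) :
  directed le -> (forall t, exists i0, forall i, le i0 i -> P t i) ->
  exists i0, forall i, le i0 i -> forall t, t \in s -> P t i.
Proof.
move=> [refl [trans [[j _] ub]]] H; elim: s => [|t s [j0 Hj0]].
  by exists j => i _ t; rewrite in_nil.
have [i0 Hi0] := H t; have [k [k1 k2]] := ub i0 j0.
exists k => i ki u; rewrite in_cons => /orP[/eqP ->|us].
  exact: Hi0 (trans _ _ _ k1 ki).
exact: Hj0 (trans _ _ _ k2 ki) _ us.
Qed.

End Misc.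
Section Key.
Variable R : realType.
Local Notation C := R[i].
Local Notation Re := (@complex.Re R).
Variables (A X : completeNormedModType C) (mulA : A -> A -> A).
Variables (l : A -> X -> X) (r : X -> A -> X) (D : A -> X).
Hypothesis Hbim : banach_bimodule mulA l r.
Hypothesis Hamen : approx_amenable mulA.
Hypothesis Dadd : forall a b, D (a + b) = D a + D b.
Hypothesis Dlin : forall (k : C) a, D (k *: a) = k *: D a.
Variable MD : R.
Hypothesis MD0 : 0 <= MD.
Hypothesis Dbnd : forall a, Re `|D a| <= MD * Re `|a|.
Hypothesis Dleib : forall a b, D (mulA a b) = r (D a) b + l a (D b).

Local Notation dX := (dual X).

Let lbil := (Hbim.1.1).
Let rbil := (Hbim.2.1.1).
Let lD a : forall x y, l a (x + y) = l a x + l a y. Proof. by move=> x y; case: lbil => _ [_ []]. Qed.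
Let lZ a : forall (k : C) x, l a (k *: x) = k *: l a x. Proof. by case: lbil => _ [_ [_]]. Qed.
Let lDa : forall a b x, l (a + b) x = l a x + l b x. Proof. by case: lbil. Qed.
Let lZa : forall (k : C) a x, l (k *: a) x = k *: l a x. Proof. by case: lbil => _ []. Qed.
Let rD a : forall x y, r (x + y) a = r x a + r y a. Proof. by move=> x y; case: rbil. Qed.
Let rZ a : forall (k : C) x, r (k *: x) a = k *: r x a. Proof. by move=> k x; case: rbil => _ []. Qed.
Let rDa : forall x a b, r x (a + b) = r x a + r x b. Proof. by case: rbil => _ [_ []]. Qed.
Let rZa : forall (k : C) x a, r x (k *: a) = k *: r x a. Proof. by case: rbil => _ [_ [_]]. Qed.

Lemma l_const : exists M : R, 0 <= M /\ forall u v, Re `|l u v| <= M * Re `|u| * Re `|v|.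
Proof. exact: bb_real Hbim.1.2. Qed.
Lemma r_const : exists M : R, 0 <= M /\ forall u v, Re `|r u v| <= M * Re `|u| * Re `|v|.
Proof. exact: bb_real Hbim.2.1.2. Qed.

Let Cl := sval (cid l_const).
Let Cl0 : 0 <= Cl. Proof. exact: (svalP (cid l_const)).1. Qed.
Let ClP : forall u v, Re `|l u v| <= Cl * Re `|u| * Re `|v|. Proof. exact: (svalP (cid l_const)).2. Qed.
Let Cr := sval (cid r_const).
Let Cr0 : 0 <= Cr. Proof. exact: (svalP (cid r_const)).1. Qed.
Let CrP : forall u v, Re `|r u v| <= Cr * Re `|u| * Re `|v|. Proof. exact: (svalP (cid r_const)).2. Qed.

Lemma eqle (a b : R) : a = b -> a <= b. Proof. by move->. Qed.

Section Act.
Variables (b : A) (phi : dX).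
Lemma la_D x y : phi (r (x + y) b) = phi (r x b) + phi (r y b).
Proof. by rewrite rD dfunD. Qed.
Lemma la_Z (k : C) x : phi (r (k *: x) b) = k * phi (r x b).
Proof. by rewrite rZ dfunZ. Qed.
Lemma la_B : exists M : R, 0 <= M /\ forall x, `|phi (r x b)| <= M%:C * `|x|.
Proof.
exists (dnormR phi * Cr * Re `|b|); split.
  by rewrite !mulr_ge0 ?dnormR_ge0 ?Re_norm_ge0 ?ReX_ge0 ?Cr0 ?Cl0.
move=> x; rewrite bnd_iff; apply: (le_trans (ReX_le _ _)).
rewrite -!mulrA ler_wpM2l ?dnormR_ge0 //.
have -> : Cr * (Re `|b| * Re `|x|) = Cr * Re `|x| * Re `|b| by ring.
exact: CrP.
Qed.
Definition lact : dX := Dual la_D la_Z la_B.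

Lemma ra_D x y : phi (l b (x + y)) = phi (l b x) + phi (l b y).
Proof. by rewrite lD dfunD. Qed.
Lemma ra_Z (k : C) x : phi (l b (k *: x)) = k * phi (l b x).
Proof. by rewrite lZ dfunZ. Qed.
Lemma ra_B : exists M : R, 0 <= M /\ forall x, `|phi (l b x)| <= M%:C * `|x|.
Proof.
exists (dnormR phi * Cl * Re `|b|); split.
  by rewrite !mulr_ge0 ?dnormR_ge0 ?Re_norm_ge0 ?ReX_ge0 ?Cr0 ?Cl0.
move=> x; rewrite bnd_iff; apply: (le_trans (ReX_le _ _)).
rewrite -!mulrA ler_wpM2l ?dnormR_ge0 //.
have -> : Cl * (Re `|b| * Re `|x|) = Cl * Re `|b| * Re `|x| by ring.
exact: ClP.
Qed.
Definition ract : dX := Dual ra_D ra_Z ra_B.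
End Act.

Definition l' (b : A) (phi : dX) : dX := lact b phi.
Definition r' (phi : dX) (a : A) : dX := ract a phi.
Definition D' (a : A) (phi : dX) : C := phi (D a).

Lemma l'E b phi x : l' b phi x = phi (r x b). Proof. by []. Qed.
Lemma r'E phi a x : r' phi a x = phi (l a x). Proof. by []. Qed.

Lemma dnormR_le_C (f : dX) (M : R) : 0 <= M -> (forall x, Re `|f x| <= M * Re `|x|) -> `|f| <= M%:C.
Proof. by move=> M0 H; rewrite dual_normE Cle; apply: dnormR_le. Qed.

Lemma bim' : banach_bimodule mulA l' r'.
Proof.
have [_ [_ [Hl [Hr Hlr]]]] := Hbim.
split; [|split; [|split; [|split]]].
- split.
    split; [|split; [|split]].
    + by move=> u1 u2 v; apply: dual_ext => x; rewrite l'E dualED !l'E rDa dfunD.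
    + by move=> k u v; apply: dual_ext => x; rewrite l'E dualEZ l'E rZa dfunZ.
    + by move=> u v1 v2; apply: dual_ext => x.
    + by move=> k u v; apply: dual_ext => x.
  exists Cr%:C => u phi; rewrite (normXE u) dual_normE -!CM.
  apply: dnormR_le_C; first by rewrite !mulr_ge0 ?dnormR_ge0 ?Re_norm_ge0 ?ReX_ge0 ?Cr0 ?Cl0.
  move=> x; rewrite l'E; apply: (le_trans (ReX_le _ _)).
  apply: (le_trans (ler_wpM2l (dnormR_ge0 _) (CrP x u))).
  by apply: eqle; ring.
- split.
    split; [|split; [|split]].
    + by move=> u1 u2 v; apply: dual_ext => x.
    + by move=> k u v; apply: dual_ext => x.
    + by move=> u v1 v2; apply: dual_ext => x; rewrite r'E dualED !r'E lDa dfunD.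
    + by move=> k u v; apply: dual_ext => x; rewrite r'E dualEZ r'E lZa dfunZ.
  exists Cl%:C => phi u; rewrite (normXE u) dual_normE -!CM.
  apply: dnormR_le_C; first by rewrite !mulr_ge0 ?dnormR_ge0 ?Re_norm_ge0 ?ReX_ge0 ?Cr0 ?Cl0.
  move=> x; rewrite r'E; apply: (le_trans (ReX_le _ _)).
  apply: (le_trans (ler_wpM2l (dnormR_ge0 _) (ClP u x))).
  by apply: eqle; ring.
- by move=> a b phi; apply: dual_ext => x; rewrite !l'E Hr.
- by move=> a b phi; apply: dual_ext => x; rewrite !r'E Hl.
- by move=> a b phi; apply: dual_ext => x; rewrite l'E !r'E l'E Hlr.
Qed.

Lemma der' : dual_derivation mulA l' r' D'.
Proof.
split; [|split; [|split; [|split]]].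
- move=> a; split; [|split].
  + by move=> f g.
  + by move=> k f.
  + exists (Re `|D a|)%:C => f.
    rewrite /D' dual_normE -CM normCE Cle mulrC; exact: ReX_le.
- by move=> a b f; rewrite /D' Dadd dfunD.
- by move=> k a f; rewrite /D' Dlin dfunZ.
- exists MD%:C => a f; rewrite /D' dual_normE (normXE a) -!CM normCE Cle.
  by apply: (le_trans (ReX_le _ _)); rewrite mulrC ler_wpM2r ?dnormR_ge0.
- by move=> a b f; rewrite /D' Dleib dfunD.
Qed.

Lemma ReN_sum (I : Type) (rr : seq I) (P : pred I) (w : I -> C) :
  Re `|\sum_(i <- rr | P i) w i| <= \sum_(i <- rr | P i) Re `|w i|.
Proof.
apply: (big_ind2 (fun (z : C) (y : R) => Re `|z| <= y)) => //.
- by rewrite normr0.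
- by move=> z1 y1 z2 y2 h1 h2; apply: (le_trans (ReN_D _ _)); apply: lerD.
Qed.

Lemma dsum_eval (I : Type) (rr : seq I) (P : pred I) (g : I -> dX) x :
  (\sum_(i <- rr | P i) g i) x = \sum_(i <- rr | P i) g i x.
Proof. exact: (big_morph (fun h : dX => h x) (fun h1 h2 => dualED h1 h2 x) (dualE0 x)). Qed.

Lemma key (s : seq A) (e : R) : 0 < e ->
  exists x : X, forall a, a \in s -> Re `|D a - (l a x - r x a)| <= e.
Proof.
move=> e0.
case: (pselect (exists x : X, forall a, a \in s -> Re `|D a - (l a x - r x a)| <= e)) => // Hn.
exfalso.
have [I [le [f [dir [fdual happ]]]]] := Hamen bim' der'.
pose n := size s.
pose ak (k : 'I_n) := nth 0 s k.
pose delta (x : X) : 'I_n -> X := fun k => l (ak k) x - r x (ak k).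
pose v0 : 'I_n -> X := fun k => D (ak k).
have fctD : forall (g h : 'I_n -> X) k, (g + h) k = g k + h k by [].
have fctZ : forall (c : C) (g : 'I_n -> X) k, (c *: g) k = c *: g k by [].
have deltaD : forall x y, delta (x + y) = delta x + delta y.
  move=> x y; apply: funext => k; rewrite fctD /delta lD rD.
  by rewrite opprD addrACA.
have deltaZ : forall (c : C) x, delta (c *: x) = c *: delta x.
  by move=> c x; apply: funext => k; rewrite fctZ /delta lZ rZ scalerBr.
have far : forall x, exists k, e < Re `|v0 k - delta x k|.
  move=> x; case: (pselect (exists a, a \in s /\ e < Re `|D a - (l a x - r x a)|)).
    move=> [a [sa Ha]].
    have ia : (index a s < n)%N by rewrite index_mem.
    exists (Ordinal ia); rewrite /v0 /delta /ak /= nth_index //.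
  move=> Hne; exfalso; apply: Hn; exists x => a sa.
  rewrite leNgt; apply/negP => H; apply: Hne; exists a; split => //.
have [psi [pD pZ pB pdel pv0]] := sep_functional deltaD deltaZ e0 far.
have psi0 : psi 0 = 0 by have := pZ 0 0; rewrite scale0r mul0r.
pose ek (k : 'I_n) (x : X) : 'I_n -> X := fun j => if j == k then x else 0.
have ekD : forall k x y, ek k (x + y) = ek k x + ek k y.
  move=> k x y; apply: funext => j; rewrite fctD /ek; case: (j == k) => //.
  by rewrite addr0.
have ekZ : forall k (c : C) x, ek k (c *: x) = c *: ek k x.
  move=> k c x; apply: funext => j; rewrite fctZ /ek; case: (j == k) => //.
  by rewrite scaler0.
have Nek : forall k x, Nsum (ek k x) = Re `|x|.
  move=> k x; rewrite /Nsum (bigD1 k) //= /ek eqxx big1 ?addr0 // => j /negbTE ->.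
  by rewrite normr0.
have phD : forall k x y, psi (ek k (x + y)) = psi (ek k x) + psi (ek k y).
  by move=> k x y; rewrite ekD pD.
have phZ : forall k (c : C) x, psi (ek k (c *: x)) = c * psi (ek k x).
  by move=> k c x; rewrite ekZ pZ.
have phB : forall k, exists M : R, 0 <= M /\ forall x, `|psi (ek k x)| <= M%:C * `|x|.
  move=> k; exists (1 + 1); split; first by rewrite addr_ge0.
  move=> x; rewrite bnd_iff; apply: (le_trans (pB _)); rewrite Nek.
  by rewrite mulrDl mul1r.
pose phi (k : 'I_n) : dX := @Dual _ _ (fun x => psi (ek k x)) (phD k) (phZ k) (phB k).
have decomp : forall v : 'I_n -> X, psi v = \sum_k phi k (v k).
  move=> v.
  have dec : v = \sum_k ek k (v k).
    apply: funext => j; rewrite fct_sumE (bigD1 j) //= /ek eqxx big1 ?addr0 //.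
    by move=> k /negbTE; rewrite eq_sym => ->.
  by rewrite {1}dec (big_morph psi pD psi0).
have fD : forall i (g h : dX), f i (g + h) = f i g + f i h.
  by move=> i; case: (fdual i).
have f0 : forall i, f i 0 = 0.
  by move=> i; apply: (@addrI _ (f i 0)); rewrite -fD !addr0.
have fB : forall i (g h : dX), f i (g - h) = f i g - f i h.
  by move=> i g h; apply: (@addrI _ (f i h)); rewrite -fD addrC subrK addrC subrK.
pose K := \sum_k dnormR (phi k).
have K0 : 0 <= K by apply: sumr_ge0 => k _; exact: dnormR_ge0.
have K1 : 0 < K + 1 by rewrite ltr_wpDl.
pose eps := e / (K + 1).
have eps0 : 0 < eps by rewrite divr_gt0.
pose P (k : 'I_n) (i : I) := Re `|D' (ak k) (phi k) - (f i (r' (phi k) (ak k)) - f i (l' (ak k) (phi k)))| <= eps * dnormR (phi k).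
have HP : forall k, exists i0, forall i, le i0 i -> P k i.
  move=> k; have [i0 Hi0] := happ (ak k) eps%:C (eq_ind_r (fun b => is_true b) eps0 (Clt 0 eps)).
  exists i0 => i Hi; have := Hi0 i Hi (phi k).
  by rewrite /P dual_normE -CM (normCE (_ - _)) Cle.
have [i0 Hi0] := common_index (enum 'I_n) dir HP.
have Pi : forall k, P k i0 by move=> k; apply: Hi0 => //; [case: dir | rewrite mem_enum].
pose Z : dX := \sum_k (r' (phi k) (ak k) - l' (ak k) (phi k)).
have Z0 : Z = 0.
  apply: dual_ext => x; rewrite dualE0 dsum_eval.
  have -> : \sum_k (r' (phi k) (ak k) - l' (ak k) (phi k)) x = \sum_k phi k (delta x k).
    apply: eq_bigr => k _; by rewrite dual_app_sub r'E l'E -dfunB'.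
  by rewrite -decomp pdel.
have fZ : f i0 Z = \sum_k (f i0 (r' (phi k) (ak k)) - f i0 (l' (ak k) (phi k))).
  rewrite /Z (big_morph (f i0) (fD i0) (f0 i0)); apply: eq_bigr => k _; exact: fB.
have Hsum : psi v0 = \sum_k (D' (ak k) (phi k) - (f i0 (r' (phi k) (ak k)) - f i0 (l' (ak k) (phi k)))).
  rewrite big_split /= sumrN -fZ Z0 f0 subr0 decomp; exact: eq_bigr.
have H1 : e <= Re `|psi v0|.
  by rewrite -pv0 -Cle -normCE Re_le_norm.
have H2 : Re `|psi v0| <= eps * K.
  rewrite Hsum; apply: (le_trans (ReN_sum _ _ _)).
  rewrite /K mulr_sumr; apply: ler_sum => k _; exact: Pi.
have H3 : eps * K < e by rewrite /eps small_div.
by move: (le_lt_trans (le_trans H1 H2) H3); rewrite ltxx.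
Qed.


End Key.
Section Final.
Variable R : realType.
Local Notation C := R[i].
Local Notation Re := (@complex.Re R).

Lemma ub_real (U W : normedModType C) (f : U -> W) (M : C) :
  (forall u, `|f u| <= M * `|u|) ->
  exists MD : R, 0 <= MD /\ forall u, Re `|f u| <= MD * Re `|u|.
Proof.
move=> HM; exists (Re `|M|); split; first exact: Re_norm_ge0.
move=> u; have h := HM u.
have pos : 0 <= M * `|u| := le_trans (normr_ge0 _) h.
have : `|f u| <= `|M| * `|u|.
  by rewrite -(normr_id u) -normrM ger0_norm.
by rewrite (normXE (f u)) (normCE M) (normXE u) -!CM Cle.
Qed.

Lemma zero_of_smallX (X : normedModType C) (z : X) (K : R) : 0 <= K ->
  (forall e : R, 0 < e -> Re `|z| <= e * K) -> z = 0.
Proof.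
move=> K0 H; apply/normr0_eq0; rewrite normXE.
suff -> : Re `|z| = 0 by [].
apply/eqP; rewrite eq_le ReX_ge0 andbT; apply/ler_addgt0Pr => eps eps0.
rewrite add0r; have K1 : 0 < K + 1 by rewrite ltr_wpDl.
apply: (le_trans (H (eps / (K + 1)) _)); first by rewrite divr_gt0.
exact/ltW/small_div.
Qed.

Lemma lin_from_dense (A X : normedModType C) (D : A -> X)
  (Dadd : forall a b, D (a + b) = D a + D b) (MD : R) (MD0 : 0 <= MD)
  (Dbnd : forall a, Re `|D a| <= MD * Re `|a|) (gen : set A)
  (Hgen : forall (c : C) x, gen x -> D (c *: x) = c *: D x)
  (dense : forall a (e : R), 0 < e -> exists n (c : 'I_n -> C) (g : 'I_n -> A),
       (forall i, gen (g i)) /\ Re `|a - \sum_i c i *: g i| < e) :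
  forall (k : C) a, D (k *: a) = k *: D a.
Proof.
have D0 : D 0 = 0 by apply: (@addrI _ (D 0)); rewrite -Dadd !addr0.
have DB : forall a b, D (a - b) = D a - D b.
  by move=> a b; apply: (@addrI _ (D b)); rewrite -Dadd addrC subrK addrC subrK.
have Dsum : forall n (c : 'I_n -> C) (g : 'I_n -> A), (forall i, gen (g i)) ->
    forall k : C, D (k *: \sum_i c i *: g i) = k *: D (\sum_i c i *: g i).
  move=> n c g Hg k; rewrite scaler_sumr !(big_morph D Dadd D0) scaler_sumr.
  by apply: eq_bigr => i _; rewrite scalerA !Hgen // scalerA.
move=> k a; apply/eqP; rewrite -subr_eq0; apply/eqP.
apply: (@zero_of_smallX _ _ (MD * Re `|k| + Re `|k| * MD)).
  by rewrite addr_ge0 ?mulr_ge0 ?Re_norm_ge0.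
move=> e e0; have [n [c [g [Hg Hs]]]] := dense a e e0.
set s := \sum_i c i *: g i in Hs *.
have -> : D (k *: a) - k *: D a = D (k *: (a - s)) - k *: D (a - s).
  by rewrite scalerBr !DB Dsum // scalerBr -/s opprB addrA subrK.
apply: (le_trans (ReX_add _ _)); rewrite normrN ReX_scale.
apply: (@le_trans _ _ (MD * (Re `|k| * Re `|a - s|) + Re `|k| * (MD * Re `|a - s|))).
  apply: lerD; first by rewrite -ReX_scale; exact: Dbnd.
  by apply: ler_wpM2l; [exact: Re_norm_ge0 | exact: Dbnd].
have hs : Re `|a - s| <= e := ltW Hs.
have -> : MD * (Re `|k| * Re `|a - s|) + Re `|k| * (MD * Re `|a - s|) =
    (MD * Re `|k| + Re `|k| * MD) * Re `|a - s| by ring.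
rewrite [e * _]mulrC; apply: ler_wpM2l => //.
by rewrite addr_ge0 ?mulr_ge0 ?Re_norm_ge0.
Qed.

End Final.

Lemma Cpos (R : realType) (t : R) : 0 < t -> 0 < t%:C.
Proof. by move=> t0; rewrite -C0 Clt. Qed.

Theorem proposition2p2 (R : realType)
    (U : completeNormedModType R[i]) (mulU : U -> U -> U)
    (A : completeNormedModType R[i]) (mulA : A -> A -> A)
    (la : U -> A -> A) (ra : A -> U -> A) :
  banach_algebra mulU ->
  banach_algebra mulA ->
  banach_bimodule mulU la ra ->
  compatible_actions mulA la ra ->
  approx_amenable mulA ->
  (left_essential la \/ right_essential ra) ->
  module_approx_contractible mulU mulA la ra.
Proof.
move=> HU HA HUA Hcomp Hamen Hess X l r lu ru HXmod Hcomm D HD.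
case: HXmod => HXbim [HUXbim _].
case: HD => Dadd [[M HM] [Dleib [Dla Dra]]].
have [MD [MD0 Dbnd]] := ub_real HM.
have Dlin : forall (k : R[i]) a, D (k *: a) = k *: D a.
  case: Hess => [Hl|Hr].
  - apply: (@lin_from_dense _ _ _ D Dadd MD MD0 Dbnd (fun x => exists al b, x = la al b)).
    + move=> c x [al [b ->]].
      have [[_ [laZ _]] _] := HUA.1.
      have [[_ [luZ _]] _] := HUXbim.1.
      by rewrite -laZ !Dla luZ.
    + move=> a e e0; have [n [c [al [b Hs]]]] := Hl a e%:C (Cpos e0).
      exists n, c, (fun i => la (al i) (b i)); split; first by move=> i; exists (al i), (b i).
      by move: Hs; rewrite normXE Clt.
  - apply: (@lin_from_dense _ _ _ D Dadd MD MD0 Dbnd (fun x => exists al b, x = ra b al)).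
    + move=> c x [al [b ->]].
      have [[_ [_ [_ raZ]]] _] := HUA.2.1.
      have [[_ [_ [_ ruZ]]] _] := HUXbim.2.1.
      by rewrite -raZ !Dra ruZ.
    + move=> a e e0; have [n [c [al [b Hs]]]] := Hr a e%:C (Cpos e0).
      exists n, c, (fun i => ra (b i) (al i)); split; first by move=> i; exists (al i), (b i).
      by move: Hs; rewrite normXE Clt.
have Key := key HXbim Hamen Dadd Dlin Dbnd Dleib.
pose J := (seq A * nat)%type.
pose le (j1 j2 : J) := {subset j1.1 <= j2.1} /\ (j1.2 <= j2.2)%N.
have xe : forall j : J, exists x, forall a, a \in j.1 ->
    complex.Re `|D a - (l a x - r x a)| <= (j.2.+1%:R)^-1.
  by move=> j; apply: Key; rewrite invr_gt0 ltr0n.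
have [xn Hxn] := choice xe.
exists J, le, xn; split.
- split; [|split; [|split]].
  + by move=> j; split.
  + move=> j1 j2 j3 [s12 n12] [s23 n23]; split; last exact: leq_trans n23.
    by move=> a /s12 /s23.
  + by exists ([::], 0%N).
  + move=> j1 j2; exists (j1.1 ++ j2.1, maxn j1.2 j2.2); split; split => /=.
    * by move=> a aj; rewrite mem_cat aj.
    * exact: leq_maxl.
    * by move=> a aj; rewrite mem_cat aj orbT.
    * exact: leq_maxr.
- move=> a eps eps0.
  have ep : 0 < complex.Re eps by rewrite -Clt -ge0_RC // ltW.
  have [N HN] : exists N : nat, (complex.Re eps)^-1 < N.+1%:R.
    by exists (Num.Def.trunc (complex.Re eps)^-1); exact: truncnS_gt.
  exists ([:: a], N) => [[s m]] [/= sub Nm].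
  rewrite (normXE (_ - _)) (ge0_RC (ltW eps0)) Cle.
  apply: (le_trans (Hxn (s, m) a (sub _ (mem_head _ _)))) => /=.
  rewrite -(invrK (complex.Re eps)) lef_pV2 ?posrE ?ltr0n ?invr_gt0 //.
  apply: (le_trans (ltW HN)); by rewrite ler_nat.
Qed.
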